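(* In the setting described in the context, let $\{x^k\}$, $\{\lambda^k\}$ be generated by the IAL framework, and for each $k\ge1$ let $x(\lambda^k)\in\arg\min_{x\in\mathbb{R}^n}\mathcal{L}_\beta(x;\lambda^k)$. Then for every $k\ge1$, $$\big\|(Ax(\lambda^k)-b)-(Ax^{k+1}-b)\big\|^2\le\frac{\eta_k}{\beta}.$$
   Context: Let $A\in\mathbb{R}^{m\times n}$ and $b\in\mathbb{R}^m$. Let $f:\mathbb{R}^n\to\mathbb{R}$ be convex and differentiable with Lipschitz continuous gradient. Let $g:\mathbb{R}^n\to\mathbb{R}\cup\{+\infty\}$ be a closed proper convex (possibly nonsmooth) function with bounded domain. Fix a penalty parameter $\beta>0$. For $\lambda\in\mathbb{R}^m$, define $$\hat f_\beta(x;\lambda):=f(x)+\langle\lambda,Ax-b\rangle+\tfrac{\beta}{2}\|Ax-b\|^2,\qquad \mathcal{L}_\beta(x;\lambda):=\hat f_\beta(x;\lambda)+g(x).$$ Here $\nabla\hat f_\beta(x;\lambda)$ denotes the gradient of $\hat f_\beta$ with respect to $x$. IAL framework: choose $x^1\in\operatorname{dom} g$, $\lambda^1\in\mathbb{R}^m$, and a nonnegative sequence $\{\eta_k\}$. For $k=1,2,\dots$: find a point $x^{k+1}$ such that $$\max_{x\in\mathbb{R}^n}\Big\{\langle\nabla\hat f_\beta(x^{k+1};\lambda^k),\,x^{k+1}-x\rangle+g(x^{k+1})-g(x)\Big\}\le\eta_k,$$ and then set $\lambda^{k+1}=\lambda^k+\beta(Ax^{k+1}-b)$. *)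

(* Defs.v *)
From HB Require Import structures.
From mathcomp Require Import all_boot all_order all_algebra.
From mathcomp Require Import all_classical all_reals all_analysis.
Set Implicit Arguments. Unset Strict Implicit. Unset Printing Implicit Defensive.
Import Order.TTheory GRing.Theory Num.Theory.
Import numFieldNormedType.Exports.
Local Open Scope classical_set_scope.
Local Open Scope ring_scope.

Definition dotv (R : realType) (n : nat) (u v : 'cV[R]_n) : R :=
  \sum_(i < n) u i 0 * v i 0.
Definition enorm (R : realType) (n : nat) (v : 'cV[R]_n) : R :=
  Num.sqrt (dotv v v).

(* Gradient of a (Frechet-)differentiable f : R^n -> R:
   the vector of partial derivatives, i.e. the Riesz representative
   of the differential 'd f x. *)
Definition grad (R : realType) (n : nat) (f : 'cV[R]_n -> R) (x : 'cV[R]_n)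
  : 'cV[R]_n := \col_(i < n) ('d f x (delta_mx i 0)).

Definition convex_fun (R : realType) (n : nat) (f : 'cV[R]_n -> R) : Prop :=
  forall (x y : 'cV[R]_n) (t : R), 0 <= t <= 1 ->
    f (t *: x + (1 - t) *: y) <= t * f x + (1 - t) * f y.

Definition lipschitz_grad (R : realType) (n : nat) (f : 'cV[R]_n -> R) : Prop :=
  exists L : R, forall x y : 'cV[R]_n,
    enorm (grad f x - grad f y) <= L * enorm (x - y).

Definition edom (R : realType) (n : nat) (g : 'cV[R]_n -> \bar R) : set 'cV[R]_n :=
  [set x | (g x < +oo)%E].

Definition closed_efun (R : realType) (n : nat) (g : 'cV[R]_n -> \bar R) : Prop :=
  closed [set p : 'cV[R]_n * R | (g p.1 <= p.2%:E)%E].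

Definition proper_efun (R : realType) (n : nat) (g : 'cV[R]_n -> \bar R) : Prop :=
  (forall x, g x != -oo%E) /\ exists x, (g x < +oo)%E.

Definition convex_efun (R : realType) (n : nat) (g : 'cV[R]_n -> \bar R) : Prop :=
  forall (x y : 'cV[R]_n) (t : R), 0 <= t <= 1 ->
    let z := t *: x + (1 - t) *: y in
    (g z <= t%:E * g x + (1 - t)%:E * g y)%E.

Definition bounded_dom (R : realType) (n : nat) (g : 'cV[R]_n -> \bar R) : Prop :=
  exists M : R, forall x, edom g x -> enorm x <= M.

Definition fhat (R : realType) (m n : nat) (f : 'cV[R]_n -> R) (A : 'M[R]_(m, n))
  (b : 'cV[R]_m) (beta : R) (lam : 'cV[R]_m) (x : 'cV[R]_n) : R :=
  f x + dotv lam (A *m x - b) + beta / 2 * (enorm (A *m x - b)) ^+ 2.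

Definition Lbeta (R : realType) (m n : nat) (f : 'cV[R]_n -> R)
  (g : 'cV[R]_n -> \bar R) (A : 'M[R]_(m, n)) (b : 'cV[R]_m) (beta : R)
  (lam : 'cV[R]_m) (x : 'cV[R]_n) : \bar R :=
  ((fhat f A b beta lam x)%:E + g x)%E.

(* Main.v *)
Require Import Defs.
From HB Require Import structures.
From mathcomp Require Import all_boot all_order all_algebra.
From mathcomp Require Import all_classical all_reals all_analysis.
From mathcomp Require Import ring lra.
Import Order.TTheory GRing.Theory Num.Theory.
Import numFieldNormedType.Exports.
Local Open Scope classical_set_scope.
Local Open Scope ring_scope.

Section S.
Variable R : realType.

Lemma diff_sumf n p (G : 'I_p -> 'cV[R]_n -> R) y :
  (forall i, differentiable (G i) y) ->
  differentiable (fun x => \sum_(i < p) G i x) y.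
Proof. move=> H; rewrite -fct_sumE; exact: differentiable_sum. Qed.

Lemma diff_aff m n (A : 'M[R]_(m, n)) (b : 'cV[R]_m) i y :
  differentiable (fun x : 'cV[R]_n => (A *m x - b) i 0) y.
Proof.
have -> : (fun x : 'cV[R]_n => (A *m x - b) i 0) =
   (fun x => \sum_(j < n) A i j * x j 0) - cst (b i 0).
  by apply/funext => x; rewrite /= !mxE.
apply: differentiableB; last exact: differentiable_cst.
apply: diff_sumf => j.
have -> : (fun x : 'cV[R]_n => A i j * x j 0) = cst (A i j) * (fun x => x j 0).
  by apply/funext.
apply: differentiableM; [exact: differentiable_cst| exact: differentiable_coord].
Qed.

Lemma dotv_ge0 n (v : 'cV[R]_n) : 0 <= dotv v v.
Proof. by apply: sumr_ge0 => i _; rewrite -expr2 sqr_ge0. Qed.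

Lemma enorm_sq n (v : 'cV[R]_n) : enorm v ^+ 2 = dotv v v.
Proof. by rewrite /enorm sqr_sqrtr // dotv_ge0. Qed.

Lemma diff_fhat m n f (A : 'M[R]_(m, n)) b beta lam y :
  differentiable f y -> differentiable (fhat f A b beta lam) y.
Proof.
move=> df.
have -> : fhat f A b beta lam = f + (fun x => \sum_(i < m) lam i 0 * (A *m x - b) i 0)
   + cst (beta / 2) * (fun x => \sum_(i < m) (A *m x - b) i 0 * (A *m x - b) i 0).
  by apply/funext => x; rewrite /fhat enorm_sq.
apply: differentiableD; first apply: differentiableD => //.
  apply: diff_sumf => i; apply: differentiableM; first exact: differentiable_cst.
  exact: diff_aff.
apply: differentiableM; first exact: differentiable_cst.
by apply: diff_sumf => i; apply: differentiableM; exact: diff_aff.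
Qed.

Lemma d_dotv n (F : 'cV[R]_n -> R) y v :
  'd F y v = dotv (grad F y) v.
Proof.
rewrite /dotv /grad.
rewrite [in LHS](matrix_sum_delta v) linear_sum /=.
apply: eq_bigr => i _; rewrite big_ord1 linearZ /= !mxE mulrC.
by rewrite [j in v i j]ord1.
Qed.

Definition Dq {m n} (A : 'M[R]_(m, n)) b p q :=
  dotv ((A *m p - b) - (A *m q - b)) ((A *m p - b) - (A *m q - b)).

Lemma aff_comb m n (A : 'M[R]_(m, n)) (b : 'cV[R]_m) t p q :
  A *m (t *: p + (1 - t) *: q) - b = t *: (A *m p - b) + (1 - t) *: (A *m q - b).
Proof.
rewrite mulmxDr -!scalemxAr !scalerBr.
rewrite addrACA -opprD -scalerDl (addrC t) subrK scale1r.
by [].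
Qed.

Lemma dot_lin p (lam u w : 'cV[R]_p) t :
  dotv lam (t *: u + (1 - t) *: w) = t * dotv lam u + (1 - t) * dotv lam w.
Proof.
rewrite /dotv !mulr_sumr -big_split; apply: eq_bigr => i _; rewrite !mxE /=; ring.
Qed.

Lemma dot_quad p (u w : 'cV[R]_p) t :
  dotv (t *: u + (1 - t) *: w) (t *: u + (1 - t) *: w) =
   t * dotv u u + (1 - t) * dotv w w - t * (1 - t) * dotv (u - w) (u - w).
Proof.
rewrite /dotv !mulr_sumr -big_split -sumrB; apply: eq_bigr => i _; rewrite !mxE /=; ring.
Qed.

Lemma fhat_sc m n f (A : 'M[R]_(m, n)) b beta lam t p q :
  convex_fun f -> 0 <= t <= 1 ->
  fhat f A b beta lam (t *: p + (1 - t) *: q) <=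
  t * fhat f A b beta lam p + (1 - t) * fhat f A b beta lam q
    - beta / 2 * (t * (1 - t)) * Dq A b p q.
Proof.
move=> cf ht; have := cf p q t ht; rewrite /fhat !enorm_sq aff_comb /Dq.
set u := A *m p - b; set w := A *m q - b.
rewrite dot_lin dot_quad => H.
have -> : t * (f p + dotv lam u + beta / 2 * dotv u u) +
  (1 - t) * (f q + dotv lam w + beta / 2 * dotv w w) -
  beta / 2 * (t * (1 - t)) * dotv (u - w) (u - w)
  = (t * f p + (1 - t) * f q) + (t * dotv lam u + (1 - t) * dotv lam w)
    + beta / 2 * (t * dotv u u + (1 - t) * dotv w w - t * (1 - t) * dotv (u - w) (u - w)) by ring.
by rewrite lerD2r lerD2r.
Qed.

Lemma grad_ineq m n f (A : 'M[R]_(m, n)) b beta lam p y :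
  convex_fun f -> differentiable f y ->
  dotv (grad (fhat f A b beta lam) y) (p - y) <=
  fhat f A b beta lam p - fhat f A b beta lam y - beta / 2 * Dq A b p y.
Proof.
move=> cf df.
set h := fhat f A b beta lam; set v := p - y; set D := Dq A b p y.
set C := h p - h y - beta / 2 * D.
have dh : differentiable h y by exact: diff_fhat.
rewrite -d_dotv -deriveE //.
set q := (fun t : R => t^-1 *: ((h \o shift y) (t *: v) - h y)).
have hq : forall t, 0 < t <= 1 -> q t - beta / 2 * D * t <= C.
  move=> t /andP[t0 t1].
  have ht : 0 <= t <= 1 by rewrite ltW.
  have := @fhat_sc m n f A b beta lam t p y cf ht.
  have -> : t *: p + (1 - t) *: y = t *: v + y.
    by rewrite /v scalerBr scalerBl scale1r addrA addrAC.
  rewrite -/h -/D /q /= => H.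
  have tn : t != 0 by rewrite gt_eqF.
  rewrite -(ler_pM2l t0) mulrBr mulrA (mulrC t (t^-1)) mulVf // mul1r.
  rewrite /C; move: H; set X := h (t *: v + y); move=> H.
  have : X - h y <= t * (h p - h y) - beta / 2 * (t * (1 - t)) * D.
    by move: H; nra.
  move=> H2.
  move: H2; clear; nra.
have cq : q @ 0^' --> 'D_v h y by exact: diff_derivable.
have cq2 : (fun t => q t - beta / 2 * D * t) @ 0^'+ --> 'D_v h y - beta / 2 * D * 0.
  apply: cvgB; first exact: cvg_dnbhs_at_right.
  apply: cvgMr; apply: cvg_at_right_filter; exact: cvg_id.
rewrite mulr0 subr0 in cq2.
apply: (cvgr_to_le cq2).
near=> t; apply: hq; apply/andP; split.
  by near: t; exact: nbhs_right_gt.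
by near: t; exact: nbhs_right_le.
Unshelve. all: by end_near.
Qed.

Lemma dotvN n (a u w : 'cV[R]_n) : dotv a (u - w) = - dotv a (w - u).
Proof.
rewrite /dotv -sumrN; apply: eq_bigr => i _; rewrite !mxE /=; ring.
Qed.

Lemma fin_arg (a e D : R) : 0 <= e -> 0 < a -> 0 <= D ->
  (forall t, 0 <= t < 1 -> a / 2 * D * (1 + t) <= e) -> D <= e / a.
Proof.
move=> e0 a0 D0 H.
rewrite ler_pdivlMr //.
case: (leP (D * a) e) => // hlt; exfalso.
have aD0 : 0 < a * D by rewrite mulrC; apply: le_lt_trans hlt.
have aDn : a * D != 0 by rewrite gt_eqF.
have t0 : 0 <= e / (a * D) by rewrite divr_ge0 // ltW.
have t1 : e / (a * D) < 1 by rewrite ltr_pdivrMr // mul1r mulrC.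
have := H (e / (a * D)) (introT andP (conj t0 t1)).
have -> : a / 2 * D * (1 + e / (a * D)) = (a * D + e) / 2.
  field; apply/andP; split; [by move: aDn; rewrite mulf_eq0 negb_or => /andP[] | by rewrite gt_eqF].
move: hlt; rewrite mulrC; lra.
Qed.
End S.

Theorem lemma2 (R : realType) (m n : nat) (A : 'M[R]_(m, n)) (b : 'cV[R]_m)
  (f : 'cV[R]_n -> R) (g : 'cV[R]_n -> \bar R) (beta : R)
  (x : nat -> 'cV[R]_n) (lam : nat -> 'cV[R]_m) (eta : nat -> R)
  (xl : nat -> 'cV[R]_n) :
  convex_fun f ->
  (forall z, differentiable f z) ->
  lipschitz_grad f ->
  closed_efun g -> proper_efun g -> convex_efun g -> bounded_dom g ->
  0 < beta ->
  edom g (x 1%N) ->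
  (forall k, 0 <= eta k) ->
  (forall k, (1 <= k)%N ->
     (forall z : 'cV[R]_n,
        ((dotv (grad (fhat f A b beta (lam k)) (x k.+1)) (x k.+1 - z))%:E
          + g (x k.+1) - g z <= (eta k)%:E)%E)
     /\ lam k.+1 = lam k + beta *: (A *m x k.+1 - b)) ->
  (forall k, (1 <= k)%N ->
     forall z : 'cV[R]_n,
       (Lbeta f g A b beta (lam k) (xl k) <= Lbeta f g A b beta (lam k) z)%E) ->
  forall k, (1 <= k)%N ->
    enorm ((A *m xl k - b) - (A *m x k.+1 - b)) ^+ 2 <= eta k / beta.
Proof.
move=> cf df _ _ [gN _] cg _ b0 gx1 eta0 Hx Hm k hk.
have [Hin _] := Hx k hk; have Hmk := Hm k hk.
set y := x k.+1; set xs := xl k; set h := fhat f A b beta (lam k).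
have [r1 Er1] : exists r, g (x 1%N) = r%:E.
  move: gx1 (gN (x 1%N)); rewrite /edom /=.
  by case: (g (x 1%N)) => [r| |] // _ _; exists r.
have [Gy Ey] : exists r, g y = r%:E.
  have := Hin (x 1%N); rewrite Er1; move: (gN y).
  by case: (g y) => [r| |] //; [move=> _ _; exists r].
have [Gx Ex] : exists r, g xs = r%:E.
  have := Hmk y; rewrite /Lbeta -/h -/xs -/y Ey; move: (gN xs).
  by case: (g xs) => [r| |] //; [move=> _ _; exists r].
have I1 : dotv (grad h y) (y - xs) + Gy - Gx <= eta k.
  by have := Hin xs; rewrite -/h -/y Ey Ex; exact.
have I3 := @grad_ineq R m n f A b beta (lam k) xs y cf (df y).
rewrite -/h dotvN in I1.
rewrite -/h in I3; rewrite enorm_sq -/(Dq R A b xs y).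
apply: (@fin_arg R _ _ _ (eta0 k) b0 (@dotv_ge0 R _ _)) => t /andP[t0 t1].
have ht : 0 <= t <= 1 by rewrite t0 ltW.
have Hs := @fhat_sc R m n f A b beta (lam k) t xs y cf ht.
have Hg := cg xs y t ht; rewrite /= Ex Ey -EFinM -EFinM -EFinD in Hg.
have HL := Hmk (t *: xs + (1 - t) *: y).
rewrite /Lbeta -/h -/xs Ex in HL.
have HL2 : h xs + Gx <= h (t *: xs + (1 - t) *: y) + (t * Gx + (1 - t) * Gy).
  rewrite -lee_fin; apply: le_trans HL _; rewrite (EFinD (h _)); exact: leeD2l.
rewrite -/h in Hs.
set D := Dq R A b xs y in I3 Hs *.
set Z := h (t *: xs + (1 - t) *: y) in HL2 Hs.
have : (1 - t) * (h xs + Gx - h y - Gy + beta / 2 * t * D) <= 0.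
  move: HL2 Hs; clear; nra.
have t1p : 0 < 1 - t by lra.
rewrite pmulr_rle0 // => H2.
change (beta / 2 * D * (1 + t) <= eta k).
move: I1 I3 H2; clear; lra.
Qed.
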